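(* Let $M,N$ be positive integers. For $m,n,i,j\in\{1,\dots,N\}$ and $k,\ell\in\{1,\dots,M\}$ define $$A_{k\ell ij}^{mn}=\int_0^1\sin(m\pi x)\sin(k\pi x)\cos(i\pi x)\,dx\int_0^1\sin(n\pi y)\cos(\ell \pi y)\sin(j\pi y)\,dy,$$ $$B_{k\ell ij}^{mn}=\int_0^1\sin(m\pi x)\cos(k\pi x)\sin(i\pi x)\,dx\int_0^1\sin(n\pi y)\sin(\ell \pi y)\cos(j\pi y)\,dy,$$ and $$\hat K_{ij}^{mn}=\max\Big\{i\Big(\sum_{k,\ell=1}^M(k^2+\ell^2)^{-1}(A_{k\ell ij}^{mn})^2\Big)^{1/2},\ j\Big(\sum_{k,\ell=1}^M(k^2+\ell^2)^{-1}(B_{k\ell ij}^{mn})^2\Big)^{1/2}\Big\}.$$ Let $\alpha_{k\ell},\beta_{k\ell}$ ($k,\ell=1,\dots,M$) be real numbers satisfying $\frac{\pi^2}{4}\sum_{k,\ell=1}^M(k^2+\ell^2)(\alpha_{k\ell}^2+\beta_{k\ell}^2)=1$, and set $$F_{ij}^{mn}=\sum_{k,\ell=1}^M iA_{k\ell ij}^{mn}\alpha_{k\ell},\qquad G_{ij}^{mn}=\sum_{k,\ell=1}^M jB_{k\ell ij}^{mn}\beta_{k\ell}.$$ Then for all $m,n,i,j\in\{1,\dots,N\}$, $$-2\sqrt{2}\hat K_{ij}^{mn}\le F_{ij}^{mn}+G_{ij}^{mn}\le 2\sqrt{2}\hat K_{ij}^{mn}.$$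
   Context: The quantities arise from a spectral Galerkin discretization of the advection-diffusion equation on $[0,1]^2$ with $\phi=\sum_{i,j}a_{ij}(t)\sin(i\pi x)\sin(j\pi y)$ and velocity $v_1=\sum_{k,\ell}\alpha_{k\ell}\sin(k\pi x)\cos(\ell\pi y)$, $v_2=\sum_{k,\ell}\beta_{k\ell}\cos(k\pi x)\sin(\ell\pi y)$; the normalization $\frac{\pi^2}{4}\sum(k^2+\ell^2)(\alpha_{k\ell}^2+\beta_{k\ell}^2)=1$ is the condition $\|\nabla\mathbf v\|_{L^2}^2=1$. *)

(* Defs.v *)
From Stdlib Require Import Reals.
From Coquelicot Require Import Coquelicot.
Open Scope R_scope.

Definition sumR (a b : nat) (f : nat -> R) : R := sum_n_m f a b.

Definition A_coef (k l i j m n : nat) : R :=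
  RInt (fun x => sin (INR m * PI * x) * sin (INR k * PI * x) * cos (INR i * PI * x)) 0 1 *
  RInt (fun y => sin (INR n * PI * y) * cos (INR l * PI * y) * sin (INR j * PI * y)) 0 1.

Definition B_coef (k l i j m n : nat) : R :=
  RInt (fun x => sin (INR m * PI * x) * cos (INR k * PI * x) * sin (INR i * PI * x)) 0 1 *
  RInt (fun y => sin (INR n * PI * y) * sin (INR l * PI * y) * cos (INR j * PI * y)) 0 1.

Definition Khat (M i j m n : nat) : R :=
  Rmax
    (INR i * sqrt (sumR 1 M (fun k => sumR 1 M (fun l =>
        / (INR k ^ 2 + INR l ^ 2) * (A_coef k l i j m n) ^ 2))))
    (INR j * sqrt (sumR 1 M (fun k => sumR 1 M (fun l =>
        / (INR k ^ 2 + INR l ^ 2) * (B_coef k l i j m n) ^ 2)))).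

Definition F_coef (M : nat) (alpha : nat -> nat -> R) (i j m n : nat) : R :=
  sumR 1 M (fun k => sumR 1 M (fun l => INR i * A_coef k l i j m n * alpha k l)).

Definition G_coef (M : nat) (beta : nat -> nat -> R) (i j m n : nat) : R :=
  sumR 1 M (fun k => sumR 1 M (fun l => INR j * B_coef k l i j m n * beta k l)).

(* Main.v *)
Require Import Defs.
From Stdlib Require Import Reals Lra Lia Psatz.
From Coquelicot Require Import Coquelicot.
Open Scope R_scope.

Lemma sumR_le_loc a b (f g : nat -> R) :
  (forall k, (a <= k <= b)%nat -> f k <= g k) -> sumR a b f <= sumR a b g.
Proof.
  intros H. unfold sumR.
  pose (hh := fun k => if andb (Nat.leb a k) (Nat.leb k b) then g k else f k).
  rewrite (sum_n_m_ext_loc g hh).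
  - apply sum_n_m_le. intros k. unfold hh.
    destruct (Nat.leb a k) eqn:E1; destruct (Nat.leb k b) eqn:E2; simpl; try lra.
    apply H. apply Nat.leb_le in E1, E2. lia.
  - intros k Hk. unfold hh. destruct Hk as [H1 H2].
    apply Nat.leb_le in H1, H2. rewrite H1, H2. reflexivity.
Qed.

Lemma sumR_plus a b f g : sumR a b (fun k => f k + g k) = sumR a b f + sumR a b g.
Proof. unfold sumR. apply (sum_n_m_plus (G:=R_AbelianMonoid)). Qed.

Lemma sumR_mult a b c f : sumR a b (fun k => c * f k) = c * sumR a b f.
Proof. unfold sumR. apply (sum_n_m_mult_l (K:=R_Ring)). Qed.

Lemma bound_one M (i : R) (C : nat -> nat -> R) (al : nat -> nat -> R) (t : R) (s : R) :
  0 < t -> s * s = 1 ->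
  2 * (s * sumR 1 M (fun k => sumR 1 M (fun l => i * C k l * al k l))) <=
  t * (i ^ 2 * sumR 1 M (fun k => sumR 1 M (fun l => / (INR k ^ 2 + INR l ^ 2) * C k l ^ 2)))
  + / t * sumR 1 M (fun k => sumR 1 M (fun l => (INR k ^ 2 + INR l ^ 2) * al k l ^ 2)).
Proof.
  intros Ht Hs.
  rewrite <- !sumR_mult, <- sumR_plus.
  apply sumR_le_loc. intros k Hk. cbv beta.
  rewrite <- !sumR_mult, <- sumR_plus.
  apply sumR_le_loc. intros l Hl.
  assert (Hk1 : 1 <= INR k) by (apply (le_INR 1); lia).
  assert (Hw : 0 < INR k ^ 2 + INR l ^ 2) by nra.
  set (w := INR k ^ 2 + INR l ^ 2) in *.
  set (xx := C k l). set (yy := al k l).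
  assert (E : t * (i ^ 2 * (/ w * xx ^ 2)) + / t * (w * yy ^ 2)
             = ((t * i * xx) ^ 2 + (w * yy) ^ 2) / (t * w)) by (field; lra).
  rewrite E. apply Rmult_le_reg_r with (t * w). nra.
  unfold Rdiv. rewrite (Rmult_assoc _ (/ (t * w)) (t * w)), Rinv_l by nra. rewrite Rmult_1_r.
  assert (H0 : 0 <= (t * i * xx - s * (w * yy)) ^ 2) by apply pow2_ge_0.
  assert (H1 : (s * (w * yy)) ^ 2 = (w * yy) ^ 2).
  { replace ((s * (w * yy)) ^ 2) with ((s * s) * (w * yy) ^ 2) by ring. rewrite Hs. ring. }
  nra.
Qed.

Lemma sumR_nonneg_w M (C : nat -> nat -> R) :
  0 <= sumR 1 M (fun k => sumR 1 M (fun l => / (INR k ^ 2 + INR l ^ 2) * C k l ^ 2)).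
Proof.
  replace 0 with (sumR 1 M (fun k => sumR 1 M (fun l => 0))).
  2:{ unfold sumR. rewrite (sum_n_m_ext _ (fun _ => @zero R_AbelianMonoid)).
      apply (sum_n_m_const_zero (G:=R_AbelianMonoid)). intros. apply (sum_n_m_const_zero (G:=R_AbelianMonoid)). }
  apply sumR_le_loc. intros k Hk. apply sumR_le_loc. intros l Hl.
  assert (Hk1 : 1 <= INR k) by (apply (le_INR 1); lia).
  assert (Hw : 0 < INR k ^ 2 + INR l ^ 2) by nra.
  apply Rmult_le_pos. left; apply Rinv_0_lt_compat; exact Hw. nra.
Qed.

Theorem mainTheorem2 (M N : nat) (alpha beta : nat -> nat -> R) :
  (1 <= M)%nat -> (1 <= N)%nat ->
  PI ^ 2 / 4 * sumR 1 M (fun k => sumR 1 M (fun l =>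
      (INR k ^ 2 + INR l ^ 2) * (alpha k l ^ 2 + beta k l ^ 2))) = 1 ->
  forall m n i j : nat,
    (1 <= m <= N)%nat -> (1 <= n <= N)%nat -> (1 <= i <= N)%nat -> (1 <= j <= N)%nat ->
    - (2 * sqrt 2 * Khat M i j m n) <= F_coef M alpha i j m n + G_coef M beta i j m n /\
    F_coef M alpha i j m n + G_coef M beta i j m n <= 2 * sqrt 2 * Khat M i j m n.
Proof.
  intros HM HN Hsum m n i j Hm Hn Hi Hj.
  set (SA := sumR 1 M (fun k => sumR 1 M (fun l => / (INR k ^ 2 + INR l ^ 2) * A_coef k l i j m n ^ 2))).
  set (SB := sumR 1 M (fun k => sumR 1 M (fun l => / (INR k ^ 2 + INR l ^ 2) * B_coef k l i j m n ^ 2))).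
  set (Sa := sumR 1 M (fun k => sumR 1 M (fun l => (INR k ^ 2 + INR l ^ 2) * alpha k l ^ 2))).
  set (Sb := sumR 1 M (fun k => sumR 1 M (fun l => (INR k ^ 2 + INR l ^ 2) * beta k l ^ 2))).
  assert (Hab : Sa + Sb = sumR 1 M (fun k => sumR 1 M (fun l =>
      (INR k ^ 2 + INR l ^ 2) * (alpha k l ^ 2 + beta k l ^ 2)))).
  { unfold Sa, Sb. rewrite <- sumR_plus. unfold sumR. apply sum_n_m_ext. intros k.
    fold (sumR 1 M (fun l => (INR k ^ 2 + INR l ^ 2) * alpha k l ^ 2)).
    fold (sumR 1 M (fun l => (INR k ^ 2 + INR l ^ 2) * beta k l ^ 2)).
    rewrite <- sumR_plus. unfold sumR. apply sum_n_m_ext. intros l. unfold AbelianMonoid.sort; simpl. ring. }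
  rewrite <- Hab in Hsum.
  assert (HPI : 3 < PI) by (pose proof PI2_3_2; lra).
  set (c := Sa + Sb) in *.
  assert (Hc : c = 4 / PI ^ 2).
  { apply Rmult_eq_reg_l with (PI ^ 2 / 4). rewrite Hsum. field. lra.
    apply Rgt_not_eq. apply Rdiv_lt_0_compat; nra. }
  assert (Hc0 : 0 < c) by (rewrite Hc; apply Rdiv_lt_0_compat; nra).
  assert (Hc1 : c < 1/2).
  { rewrite Hc. apply Rmult_lt_reg_r with (PI ^ 2). nra. unfold Rdiv.
    rewrite Rmult_assoc, Rinv_l by nra. nra. }
  set (K := Khat M i j m n).
  assert (HSA := sumR_nonneg_w M (fun k l => A_coef k l i j m n)).
  assert (HSB := sumR_nonneg_w M (fun k l => B_coef k l i j m n)).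
  cbv beta in HSA, HSB. fold SA in HSA. fold SB in HSB.
  assert (Hi1 : 1 <= INR i) by (apply (le_INR 1); lia).
  assert (Hj1 : 1 <= INR j) by (apply (le_INR 1); lia).
  assert (HK1 : INR i * sqrt SA <= K) by apply Rmax_l.
  assert (HK2 : INR j * sqrt SB <= K) by apply Rmax_r.
  assert (Hq1 : 0 <= sqrt SA) by apply sqrt_pos.
  assert (Hq2 : 0 <= sqrt SB) by apply sqrt_pos.
  assert (HA : INR i ^ 2 * SA <= K ^ 2).
  { replace (INR i ^ 2 * SA) with ((INR i * sqrt SA) ^ 2).
    2:{ rewrite Rpow_mult_distr, pow2_sqrt by lra. ring. }
    apply pow_incr; split; [apply Rmult_le_pos; lra | exact HK1]. }
  assert (HB : INR j ^ 2 * SB <= K ^ 2).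
  { replace (INR j ^ 2 * SB) with ((INR j * sqrt SB) ^ 2).
    2:{ rewrite Rpow_mult_distr, pow2_sqrt by lra. ring. }
    apply pow_incr; split; [apply Rmult_le_pos; lra | exact HK2]. }
  assert (HK0 : 0 <= K) by (pose proof (Rmult_le_pos _ _ (Rle_trans _ _ _ Rle_0_1 Hi1) Hq1); lra).
  set (F := F_coef M alpha i j m n).
  set (G := G_coef M beta i j m n).
  assert (Key : forall t s, 0 < t -> s * s = 1 -> 2 * (s * (F + G)) <= 2 * t * K ^ 2 + / t * c).
  { intros t s Ht Hs.
    pose proof (bound_one M (INR i) (fun k l => A_coef k l i j m n) alpha t s Ht Hs) as H1.
    pose proof (bound_one M (INR j) (fun k l => B_coef k l i j m n) beta t s Ht Hs) as H2.
    cbv beta in H1, H2. fold SA Sa in H1. fold SB Sb in H2.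
    change (sumR 1 M (fun k => sumR 1 M (fun l => INR i * A_coef k l i j m n * alpha k l))) with F in H1.
    change (sumR 1 M (fun k => sumR 1 M (fun l => INR j * B_coef k l i j m n * beta k l))) with G in H2.
    unfold c.
    assert (T1 : t * (INR i ^ 2 * SA) <= t * K ^ 2) by (apply Rmult_le_compat_l; lra).
    assert (T2 : t * (INR j ^ 2 * SB) <= t * K ^ 2) by (apply Rmult_le_compat_l; lra).
    assert (E : / t * (Sa + Sb) = / t * Sa + / t * Sb) by ring.
    rewrite E. replace (2 * (s * (F + G))) with (2 * (s * F) + 2 * (s * G)) by ring. lra. }
  assert (Hs2 : 1 <= sqrt 2).
  { rewrite <- sqrt_1. apply sqrt_le_1_alt. lra. }
  assert (Main : forall s, s * s = 1 -> s * (F + G) <= 2 * K).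
  { intros s Hs.
    destruct (Rle_lt_dec (s * (F + G)) 0) as [Hp|Hp]; [nra|].
    destruct (Req_dec K 0) as [HK|HK].
    - exfalso. set (P := s * (F + G)) in *.
      pose proof (Key (c / P) s ltac:(apply Rdiv_lt_0_compat; lra) Hs) as H.
      fold P in H. rewrite HK in H.
      replace (/ (c / P) * c) with P in H by (field; lra). nra.
    - pose proof (Key (/ K) s ltac:(apply Rinv_0_lt_compat; lra) Hs) as H.
      rewrite Rinv_inv in H.
      replace (2 * / K * K ^ 2) with (2 * K) in H by (field; lra).
      nra. }
  pose proof (Main 1 ltac:(ring)). pose proof (Main (-1) ltac:(ring)).
  split; nra.
Qed.
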